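(* Let $D\in QH^*(G,\mathbb Z)$ and write $D=a+ib$ as a function on $\mathrm{Spec}\,R$ with real-valued functions $a,b$. Then there is a real-valued function $r$ on $\mathrm{Spec}\,R$ with $r(p)>0$ for all $p$ such that $\overline D=r\,(a-ib)$ as functions on $\mathrm{Spec}\,R$; moreover $D*\overline D$ is a real-valued function on $\mathrm{Spec}\,R$.
   Context: Let $0<k<n$ be integers, $l=n-k$, and $G=G(k,n)$ the Grassmannian of $k$-planes in $\mathbb C^n$. Schubert classes $S_\lambda$ of $G$ are indexed by Young diagrams $\lambda=(\lambda_1\ge\dots\ge\lambda_l\ge0)$ with $\lambda_1\le k$. $QH^*(G,\mathbb Z)$ denotes the small quantum cohomology ring of $G$ with the quantum parameter $q$ set equal to $1$, a free $\mathbb Z$-module with basis the Schubert classes, product denoted $*$. The operator $X\mapsto\overline X$ is defined on Schubert classes and extended $\mathbb Z$-linearly: for $\lambda$ let $d_\lambda$ be the largest $i$ with $\lambda_i\ge i$ ($0$ if none); then $\overline{S_\lambda}=S_\mu$ with $\mu_i=d_\lambda+k-\lambda_{d_\lambda-i+1}$ for $i\le d_\lambda$ and $\mu_i=d_\lambda-\lambda_{l-i+d_\lambda+1}$ for $i>d_\lambda$. Let $R=QH^*(G,\mathbb C)=QH^*(G,\mathbb Z)\otimes\mathbb C$. It is known that $R$ is a semisimple commutative $\mathbb C$-algebra, so $\mathrm{Spec}\,R$ is a finite set of reduced points and $R$ is identified with the algebra of $\mathbb C$-valued functions on $\mathrm{Spec}\,R$; each class $X$ thus gives a function $p\mapsto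 X(p)\in\mathbb C$, with $(X*Y)(p)=X(p)Y(p)$. *)

(* Defs.v *)
(* Combinatorial model of QH^*(G(k,n)) at q = 1 via the
   Bertram / Siebert--Tian presentation. *)
From mathcomp Require Import all_boot all_order all_algebra all_field.
Set Implicit Arguments. Unset Strict Implicit. Unset Printing Implicit Defensive.
Import Order.TTheory GRing.Theory Num.Theory.
Local Open Scope ring_scope.

(* Young diagrams lambda = (lambda_1 >= ... >= lambda_l >= 0), lambda_1 <= k,
   l = n - k; stored 0-based as an l-tuple of entries in {0..k}. *)
Definition part (k n : nat) :=
  {t : (n - k).-tuple 'I_k.+1 | sorted (fun a b : nat => (b <= a)%N) (map val t)}.

Definition lam_at k n (lam : part k n) (i : nat) : nat := nth 0%N (map val (val lam)) i.

(* d_lambda = largest (1-based) i with lambda_i >= i, 0 if none *)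
Definition durfee k n (lam : part k n) : nat :=
  \max_(i < n - k | (i.+1 <= lam_at lam i)%N) i.+1.

(* the diagram mu of the bar operator, 0-based: for 1-based i' = i+1,
   mu_{i'} = d + k - lambda_{d-i'+1}      if i' <= d,
   mu_{i'} = d - lambda_{l-i'+d+1}        if i' > d. *)
Definition bar_seq k n (lam : part k n) : seq nat :=
  let d := durfee lam in let l := (n - k)%N in
  mkseq (fun i => if (i < d)%N then (d + k - lam_at lam (d - 1 - i))%N
                  else (d - lam_at lam (l - 1 - i + d))%N) l.

(* the bar operator on Schubert indices (mu is always a valid diagram;
   the insubd/inord defaults are never used) *)
Definition bar_part k n (lam : part k n) : part k n :=
  insubd lam [tuple (inord (nth 0%N (bar_seq lam) i) : 'I_k.+1) | i < n - k].

(* QH^*(G,Z) as a free Z-module on the Schubert classes *)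
Definition QH (k n : nat) := {ffun part k n -> int}.

Definition schubert k n (lam : part k n) : QH k n := [ffun mu => (mu == lam)%:Z].

(* Z-linear extension of S_lam |-> S_{bar lam} *)
Definition qh_bar k n (D : QH k n) : QH k n :=
  [ffun mu => \sum_(lam | bar_part lam == mu) D lam].

(* Spec R: ring homomorphisms Z[sigma_1..sigma_k] -> C killing the ideal
   (Y_{l+1}, ..., Y_{n-1}, Y_n + (-1)^k q) at q = 1; a point is the tuple of
   values of the special Schubert classes sigma_1..sigma_k. *)
Definition sigma k (v : {ffun 'I_k -> algC}) (m : int) : algC :=
  match m with
  | Posz 0 => 1
  | Posz m'.+1 => oapp v 0 (insub m' : option 'I_k)
  | Negz _ => 0
  end.

Definition Ydet k (v : {ffun 'I_k -> algC}) (m : nat) : algC :=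
  \det (\matrix_(i < m, j < m) sigma v (1 + j%:Z - i%:Z)).

Definition is_qpoint k n (v : {ffun 'I_k -> algC}) : bool :=
  [forall m : 'I_n, (n - k < m)%N ==> (Ydet v m == 0)]
  && (Ydet v n + (-1) ^+ k == 0).

Definition qpoint (k n : nat) := {v : {ffun 'I_k -> algC} | is_qpoint n v}.

(* value of the Schubert class S_lam at a point (Giambelli determinant) *)
Definition schub_eval k n (lam : part k n) (p : qpoint k n) : algC :=
  \det (\matrix_(i < n - k, j < n - k)
          sigma (val p) ((lam_at lam i)%:Z + j%:Z - i%:Z)).

Definition ev k n (X : QH k n) (p : qpoint k n) : algC :=
  \sum_lam (X lam)%:~R * schub_eval lam p.

(* Main.v *)
Require Import Defs.
From mathcomp Require Import all_boot all_order all_algebra all_field.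
From mathcomp Require Import perm zify ring lra.
Set Implicit Arguments. Unset Strict Implicit. Unset Printing Implicit Defensive.
Import Order.TTheory GRing.Theory Num.Theory.

Section Part.
Variables (k n : nat).
Local Notation l := (n - k).
Variable lam : part k n.

Lemma size_lam : size (map val (val lam)) = l.
Proof. by rewrite size_map size_tuple. Qed.

Lemma lam_le_k i : lam_at lam i <= k.
Proof.
rewrite /lam_at; case: (ltnP i (size (map val (val lam)))) => h.
  rewrite (nth_map ord0); last by rewrite size_map in h.
  by rewrite -ltnS ltn_ord.
by rewrite nth_default.
Qed.

Lemma lam_out i : l <= i -> lam_at lam i = 0.
Proof. by move=> h; rewrite /lam_at nth_default // size_lam. Qed.

Lemma lam_mono i j : i <= j -> j < l -> lam_at lam j <= lam_at lam i.
Proof.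
move=> hij hj; rewrite /lam_at.
have := @sorted_leq_nth _ (fun a b : nat => b <= a) _ _ 0 _ (valP lam) i j.
apply; rewrite ?inE ?size_lam //; last by lia.
by move=> a b c h1 h2; apply: leq_trans h2 h1.
Qed.

Local Notation d := (durfee lam).

Lemma durfee_le : d <= l.
Proof. by apply/bigmax_leqP => i _; exact: ltn_ord. Qed.

Lemma durfee_ge i : i < l -> i < lam_at lam i -> i < d.
Proof.
move=> hi h; have := @leq_bigmax_cond _ (fun i : 'I_l => i.+1 <= lam_at lam i)
   (fun i : 'I_l => i.+1) (Ordinal hi) h.
by [].
Qed.

Lemma durfee_lam i : i < d -> d <= lam_at lam i.
Proof.
rewrite /durfee.
case: (pickP (fun i : 'I_l => i.+1 <= lam_at lam i)) => [i0 Pi0|none].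
  case: (@arg_maxnP _ i0 (fun i : 'I_l => i.+1 <= lam_at lam i) (fun i : 'I_l => i.+1) Pi0) => j Pj maxj.
  have -> : \max_(i < l | i.+1 <= lam_at lam i) i.+1 = j.+1.
    apply/eqP; rewrite eqn_leq; apply/andP; split.
      by apply/bigmax_leqP => i' /maxj.
    by apply: (@leq_bigmax_cond _ (fun i : 'I_l => i.+1 <= lam_at lam i) (fun i : 'I_l => i.+1) j).
  move=> hi; apply: leq_trans Pj _; apply: lam_mono; first by lia.
  exact: ltn_ord.
by rewrite big_pred0.
Qed.

Lemma durfee_tail i : d <= i -> i < l -> lam_at lam i <= d.
Proof.
move=> hdi hi; rewrite leqNgt; apply/negP => h.
have hdl : d < l by lia.
have h2 : d < lam_at lam d by have := lam_mono hdi hi; lia.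
have := durfee_ge hdl h2; lia.
Qed.

Lemma durfee_le_k : d <= k.
Proof.
case: (posnP d) => [->//|h].
by apply: leq_trans (durfee_lam h) (lam_le_k 0).
Qed.

Lemma nth_bar i : i < l -> nth 0 (bar_seq lam) i =
  if i < d then d + k - lam_at lam (d - 1 - i) else d - lam_at lam (l - 1 - i + d).
Proof. by move=> hi; rewrite /bar_seq nth_mkseq. Qed.

Lemma bar_le_k i : nth 0 (bar_seq lam) i <= k.
Proof.
case: (ltnP i l) => hi; last by rewrite nth_default // size_mkseq.
rewrite nth_bar //; case: ifP => h.
  have := durfee_lam (i := d - 1 - i); lia.
have := durfee_le_k; lia.
Qed.

Lemma bar_sorted : sorted (fun a b : nat => b <= a) (bar_seq lam).
Proof.
apply/(sortedP 0) => i; rewrite size_mkseq => hi.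
rewrite !nth_bar //; last by lia.
have := durfee_le; have := durfee_le_k.
case: (ltnP i.+1 d) => h1.
  rewrite ifT; last by lia.
  have := lam_mono (i := d - 1 - i.+1) (j := d - 1 - i); lia.
case: (ltnP i d) => h2.
  have := lam_le_k (d - 1 - i); have := durfee_lam (i := d - 1 - i); lia.
have := lam_mono (i := l - 1 - i.+1 + d) (j := l - 1 - i + d); lia.
Qed.

Lemma bar_tuple_val :
  map val (val [tuple (inord (nth 0%N (bar_seq lam) i) : 'I_k.+1) | i < l]) = bar_seq lam.
Proof.
apply: (@eq_from_nth _ 0); first by rewrite size_map size_tuple size_mkseq.
move=> i; rewrite size_map size_tuple => hi.
rewrite (nth_map ord0) ?size_tuple // -/(nat_of_ord (Ordinal hi)).
rewrite -tnth_nth tnth_mktuple /= inordK // ltnS; exact: bar_le_k.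
Qed.

Lemma lam_at_bar i : lam_at (bar_part lam) i = nth 0 (bar_seq lam) i.
Proof.
rewrite /lam_at /bar_part insubdK ?bar_tuple_val //.
by rewrite unfold_in /= bar_tuple_val bar_sorted.
Qed.

End Part.

Definition rot_fun l (s : nat) (i : 'I_l) : 'I_l :=
  Ordinal (ltn_pmod (i + s) (leq_ltn_trans (leq0n i) (ltn_ord i))).

Lemma rot_inj l s : injective (@rot_fun l s).
Proof.
move=> i j /(congr1 val) /= /eqP H; apply/val_inj/eqP => /=.
by move: H; rewrite eqn_modDr !modn_small.
Qed.

Definition rot l s : {perm 'I_l} := perm (@rot_inj l s).

Lemma rotE l s (i : 'I_l) : val (rot l s i) = (i + s) %% l.
Proof. by rewrite permE. Qed.

Lemma odd_rot l s : odd_perm (rot l s) = odd (s * l.-1).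
Proof.
case: l => [|m].
  have -> : rot 0 s = 1%g by apply/permP => -[].
  by rewrite odd_perm1 muln0.
have R1 : rot m.+1 1 = lift_perm ord_max ord0 1%g.
  apply/permP => x; apply/val_inj; rewrite rotE.
  case: (unliftP ord_max x) => [y ->|->].
    rewrite lift_perm_lift perm1 /= /bump /= leqNgt ltn_ord add0n.
    by rewrite addn1 modn_small // ltnS ltn_ord.
  by rewrite lift_perm_id /= addn1 modnn.
elim: s => [|s IH].
  have -> : rot m.+1 0 = 1%g by apply/permP => x; apply/val_inj; rewrite rotE addn0 modn_small ?perm1.
  by rewrite odd_perm1.
have -> : rot m.+1 s.+1 = (rot m.+1 s * rot m.+1 1)%g.
  apply/permP => x; apply/val_inj; rewrite permM !rotE.
  by rewrite modnDml addn1 addnS.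
rewrite odd_permM IH R1 odd_lift_perm odd_perm1 /= addbF.
by rewrite addbF mulSn oddD addbC.
Qed.

Local Open Scope ring_scope.
Arguments sigma : simpl never.

Section Rec.
Variable k : nat.
Variable v : {ffun 'I_k -> algC}.

Arguments sigma : simpl never.

Lemma sigma_neg (m : nat) : sigma v (- (m.+1)%:Z) = 0.
Proof. by []. Qed.

Lemma sigma0 : sigma v 0 = 1. Proof. by []. Qed.

Lemma sigma_big (m : nat) : (k < m)%N -> sigma v m%:Z = 0.
Proof.
case: m => // m hm; rewrite /sigma. by rewrite insubF // ltnNge -ltnS hm.
Qed.

Definition Wd (a : nat -> algC) m :=
  \det (\matrix_(i < m, j < m) if i == 0%N :> nat then a j else sigma v (1 + j%:Z - i%:Z)).

Lemma Wd_rec m a : Wd a m.+2 = a 0%N * Ydet v m.+1 - Wd (fun j => a j.+1) m.+1.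
Proof.
rewrite /Wd (expand_det_col _ ord0) big_ord_recl big_ord_recl big1; last first.
  move=> i _; rewrite !mxE /=.
  by rewrite mul0r.
rewrite addr0 !mxE /= /cofactor /= /bump /= expr0 expr1 !mul1r mulN1r.
congr (_ * _ - _).
  rewrite /Ydet; congr (\det _); apply/matrixP=> i j; rewrite !mxE /=.
  by congr (sigma v _); rewrite /bump /=; lia.
congr (\det _); apply/matrixP=> i j; rewrite !mxE /=.
by case: i => [[|i]] hi //=.
Qed.


Lemma Ydet0 : Ydet v 0 = 1.
Proof. by rewrite /Ydet det_mx00. Qed.

Lemma Wd_closed m a :
  Wd a m.+1 = \sum_(j < m.+1) (-1) ^+ j * a j * Ydet v (m - j).
Proof.
elim: m a => [|m IH] a.
  by rewrite /Wd det_mx11 big_ord1 !mxE /= subnn Ydet0 expr0 mul1r mulr1.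
rewrite Wd_rec IH [RHS]big_ord_recl /= expr0 mul1r subn0; congr (_ + _).
rewrite -sumrN; apply: eq_bigr => j _.
by rewrite /bump /= add1n subSS exprS mulN1r !mulNr.
Qed.

Lemma Ydet_rec c : (0 < c)%N ->
  \sum_(i < c.+1) (-1) ^+ i * sigma v i%:Z * Ydet v (c - i) = 0.
Proof.
case: c => // c _.
rewrite big_ord_recl /= expr0 mul1r subn0 /=.
have -> : Ydet v c.+1 = Wd (fun j => sigma v (j.+1)%:Z) c.+1.
  rewrite /Ydet /Wd; congr (\det _); apply/matrixP=> i j; rewrite !mxE /=.
  by case: i => [[|i]] hi //=; congr (sigma v _); lia.
move: (Wd_closed c (fun j => sigma v (j.+1)%:Z)) => /= HW.
rewrite HW sigma0 mul1r -big_split /=.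
rewrite big1 // => j _.
by rewrite /bump /= add1n subSS exprS mulN1r !mulNr subrr.
Qed.

End Rec.

Lemma sign_sq (i : nat) : (-1) ^+ i * (-1) ^+ i = 1 :> algC.
Proof. by rewrite -exprMn mulrNN mulr1 expr1n. Qed.

Lemma sign_sub (c i : nat) : (i <= c)%N -> (-1) ^+ (c - i) = (-1) ^+ c * (-1) ^+ i :> algC.
Proof.
move=> hi; rewrite -{2}(subnK hi) exprD -mulrA sign_sq mulr1 //.
Qed.

Lemma sigma_negz k (v : {ffun 'I_k -> algC}) (x : int) : (x < 0)%R -> sigma v x = 0.
Proof. by case: x. Qed.

Lemma sum_widen (m N : nat) (F : nat -> algC) : (m <= N)%N ->
  (forall r, (m <= r)%N -> (r < N)%N -> F r = 0) ->
  \sum_(r < m) F r = \sum_(r < N) F r.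
Proof.
move=> hmN H; rewrite (big_ord_widen N F hmN) big_mkcond /=.
apply: eq_bigr => r _; case: ifP => // /negbT; rewrite -leqNgt => h.
by rewrite H.
Qed.

Lemma det_scale_perm m (A B : 'M[algC]_m) (a b : 'I_m -> algC) (s : {perm 'I_m}) :
  (forall i j, A i j = a i * B (s i) j * b j) ->
  \det A = (-1) ^+ s * (\prod_i a i) * (\prod_j b j) * \det B.
Proof.
move=> H.
have -> : A = diag_mx (\row_i a i) *m (perm_mx s *m B) *m diag_mx (\row_j b j).
  apply/matrixP => i j; rewrite mul_mx_diag mul_diag_mx -row_permE !mxE H.
  by [].
rewrite !det_mulmx !det_diag det_perm.
rewrite (eq_bigr (fun i => a i)); last by move=> i _; rewrite mxE.
rewrite [X in _ * X](eq_bigr (fun i => b i)); last by move=> i _; rewrite mxE.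
set pa := \prod_(i < m) a i; set pb := \prod_(i < m) b i.
move: pa pb => pa pb; set sg := (-1) ^+ s; set dB := \det B; by ring.
Qed.

Section Poly.
Variables (k n : nat) (hk : (0 < k)%N) (hkn : (k < n)%N).
Variable v : {ffun 'I_k -> algC}.
Hypothesis hv : is_qpoint n v.
Local Notation l := (n - k)%N.

Definition Ep : {poly algC} := \poly_(i < k.+1) sigma v i%:Z.
Definition Ap : {poly algC} := \poly_(m < l.+1) ((-1) ^+ m * Ydet v m).
Definition eps : algC := (-1) ^+ l.+1.

Lemma coefEp i : Ep`_i = sigma v i%:Z.
Proof.
rewrite coef_poly; case: ltnP => // hi; by rewrite sigma_big.
Qed.

Lemma coefAp m : Ap`_m = if (m <= l)%N then (-1) ^+ m * Ydet v m else 0.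
Proof. by rewrite coef_poly ltnS. Qed.

Lemma qY_mid m : (l < m)%N -> (m < n)%N -> Ydet v m = 0.
Proof.
move=> h1 h2; case/andP: hv => /forallP /(_ (Ordinal h2)) /= /implyP H _.
exact/eqP/H.
Qed.

Lemma qY_n : Ydet v n = - (-1) ^+ k.
Proof. by case/andP: hv => _ /eqP H; apply/eqP; rewrite -subr_eq0 opprK H. Qed.

Lemma sk_Yl : sigma v k * Ydet v l = 1.
Proof.
have H := Ydet_rec v (leq_ltn_trans (leq0n _) hkn).
have hk' : (k < n.+1)%N by lia.
rewrite (bigD1 ord0) //= (bigD1 (Ordinal hk')) //= in H; last by rewrite -val_eqE /=; lia.
rewrite big1 ?addr0 in H; last first.
  move=> i /andP [hi0 hik]; move: hi0 hik; rewrite -!val_eqE /= => hi0 hik.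
  case: (ltnP k i) => hki; first by rewrite sigma_big // mulr0 mul0r.
  by rewrite qY_mid ?mulr0 //; lia.
move: H; rewrite expr0 mul1r sigma0 mul1r subn0 qY_n.
move=> /eqP; rewrite addrC subr_eq0 => /eqP H.
have : (-1) ^+ k * ((-1) ^+ k * sigma v k * Ydet v l) = (-1) ^+ k * (-1) ^+ k by rewrite H.
by rewrite !mulrA sign_sq !mul1r.
Qed.


Lemma EA : Ep * Ap = 1 - eps *: 'X^n.
Proof.
apply/polyP => c; rewrite coefM coefB coef1 coefZ coefXn.
have [->|cpos] := posnP c.
  rewrite big_ord1 coefEp coefAp sigma0 /= Ydet0 expr0 !mul1r.
  have /negbTE -> : (0 != n)%N by lia.
  by rewrite mulr0 subr0.
case: (ltngtP c n) => hcn.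
- rewrite (eq_bigr (fun i : 'I_c.+1 => (-1) ^+ c * ((-1) ^+ i * sigma v i%:Z * Ydet v (c - i)))).
    by rewrite -mulr_sumr Ydet_rec // mulr0 mulr0 subrr.
  move=> i _; rewrite coefEp coefAp; case: (leqP (c - i) l) => h.
    rewrite sign_sub; last by move: (ltn_ord i); lia.
    by ring.
  have hi := ltn_ord i.
  by rewrite qY_mid ?mulr0 //; lia.
- rewrite big1 ?mulr0 ?subrr //; last first.
  move=> i _; rewrite coefEp coefAp.
  case: (ltnP k i) => hki; first by rewrite sigma_big // mul0r.
  by rewrite ifF ?mulr0 //; apply/negbTE; lia.
- have hk' : (k < c.+1)%N by lia.
  rewrite (bigD1 (Ordinal hk')) //= big1 ?addr0; last first.
    move=> i hik; move: hik; rewrite -val_eqE /= => hik.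
    rewrite coefEp coefAp.
    case: (ltnP k i) => hki; first by rewrite sigma_big // mul0r.
    by rewrite ifF ?mulr0 //; apply/negbTE; lia.
  rewrite coefEp coefAp hcn ifT; last by lia.
  rewrite mulr1 sub0r /eps exprS mulN1r opprK mulrA (mulrC (sigma v k)) -mulrA sk_Yl ?mulr1 //.
Qed.


Lemma Yl_neq0 : Ydet v l != 0.
Proof. by apply/eqP => H; move: sk_Yl; rewrite H mulr0 => /eqP; rewrite eq_sym oner_eq0. Qed.

Lemma eps_sq : eps * eps = 1.
Proof. exact: sign_sq. Qed.

Lemma eps_neq0 : eps != 0.
Proof. by apply/eqP => H; move: eps_sq; rewrite H mulr0 => /eqP; rewrite eq_sym oner_eq0. Qed.

Lemma size_Ap : size Ap = l.+1.
Proof.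
rewrite /Ap size_poly_eq //= mulf_neq0 ?Yl_neq0 //.
by rewrite expf_neq0 // oppr_eq0 oner_eq0.
Qed.

Lemma Ap_neq0 : Ap != 0.
Proof. by rewrite -size_poly_eq0 size_Ap. Qed.

Definition Qp : {poly algC} := 1 - eps *: 'X^n.

Lemma Qp_sep : separable_poly Qp.
Proof.
rewrite unlock; apply/Bezout_coprimepP.
exists (1, (- (n%:R)^-1) *: 'X) => /=.
have hn0 : (n%:R : algC) != 0 by rewrite pnatr_eq0; lia.
have dQ : Qp^`() = (- (eps * n%:R)) *: 'X^(n.-1).
  rewrite /Qp derivB derivC derivZ derivXn sub0r -scaler_nat scalerA scaleNr (mulrC eps) //.
rewrite dQ -scalerAl -scalerAr scalerA mul1r.
have -> : 'X * 'X^(n.-1) = 'X^n :> {poly algC}.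
  by rewrite -exprS prednK //; lia.
have -> : - n%:R^-1 * - (eps * n%:R) = eps :> algC.
  by field.
by rewrite /Qp subrK eqpxx.
Qed.

Definition rs : seq algC := sval (closed_field_poly_normal Ap).

Lemma Ap_rs : Ap = lead_coef Ap *: \prod_(x <- rs) ('X - x%:P).
Proof. exact: (svalP (closed_field_poly_normal Ap)). Qed.

Lemma lcAp_neq0 : lead_coef Ap != 0.
Proof. by rewrite lead_coef_eq0 Ap_neq0. Qed.

Lemma size_rs : size rs = l.
Proof.
have := size_Ap; rewrite Ap_rs size_scale ?lcAp_neq0 // size_prod_XsubC.
by case.
Qed.

Lemma uniq_rs : uniq rs.
Proof.
rewrite -separable_prod_XsubC -(eqp_separable (eqp_scale _ lcAp_neq0)) -Ap_rs.
apply: dvdp_separable Qp_sep.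
by rewrite /Qp -EA dvdp_mull.
Qed.

Lemma root_rs r : r \in rs -> root Ap r.
Proof.
by move=> hr; rewrite Ap_rs rootZ ?lcAp_neq0 // root_prod_XsubC.
Qed.

Lemma rs_pow r : r \in rs -> eps * r ^+ n = 1.
Proof.
move=> /root_rs /rootP H.
have : (Ep * Ap).[r] = 0 by rewrite hornerM H mulr0.
rewrite EA !hornerE => /eqP; rewrite subr_eq0 => /eqP.
by rewrite mulrC => <-.
Qed.


Definition rr (j : nat) := nth 0 rs j.
Definition zz (j : nat) := (rr j)^-1.

Lemma rr_in j : (j < l)%N -> rr j \in rs.
Proof. by move=> hj; rewrite /rr mem_nth // size_rs. Qed.

Lemma rr_pow j : (j < l)%N -> rr j ^+ n = eps.
Proof.
move=> /rr_in /rs_pow H.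
by rewrite -[LHS]mul1r -eps_sq -mulrA H mulr1.
Qed.

Lemma rr_neq0 j : (j < l)%N -> rr j != 0.
Proof.
move=> hj; apply/eqP => H; move: (rr_pow hj); rewrite H expr0n.
have /negbTE -> : (n != 0)%N by lia.
by move/eqP; rewrite eq_sym (negbTE eps_neq0).
Qed.

Lemma zz_neq0 j : (j < l)%N -> zz j != 0.
Proof. by move=> hj; rewrite invr_eq0 rr_neq0. Qed.

Lemma zz_pow j : (j < l)%N -> zz j ^+ n = eps.
Proof.
move=> hj; rewrite /zz exprVn rr_pow //.
by apply: (mulfI eps_neq0); rewrite mulfV ?eps_neq0 // eps_sq.
Qed.

Lemma zz_rr j : (j < l)%N -> zz j * rr j = 1.
Proof. by move=> hj; rewrite /zz mulVf // rr_neq0. Qed.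

Lemma zz_inj i j : (i < l)%N -> (j < l)%N -> zz i = zz j -> i = j.
Proof.
move=> hi hj /invr_inj H; apply/eqP.
by rewrite -(nth_uniq 0 _ _ uniq_rs) ?size_rs // -/(rr i) -/(rr j) H.
Qed.

Definition Bp (j : nat) := Ap %/ ('X - (rr j)%:P).

Lemma Bp_mul j : (j < l)%N -> Bp j * ('X - (rr j)%:P) = Ap.
Proof. by move=> hj; rewrite /Bp divpK // dvdp_XsubCl root_rs // rr_in. Qed.

Lemma size_Bp j : (j < l)%N -> size (Bp j) = l.
Proof.
move=> hj; have := size_Ap; rewrite -(Bp_mul hj) size_Mmonic ?monicXsubC //.
  by rewrite size_XsubC addn2 /=; case.
by apply/eqP => H; move: Ap_neq0; rewrite -(Bp_mul hj) H mul0r eqxx.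
Qed.

Lemma EB j : (j < l)%N ->
  Ep * Bp j = - (zz j)%:P * \sum_(a < n) ((zz j)%:P * 'X) ^+ a.
Proof.
move=> hj; apply: (mulIf (x := 'X - (rr j)%:P)); first by rewrite polyXsubC_eq0.
rewrite /= -mulrA Bp_mul // EA.
set y := (zz j)%:P * 'X.
have H1 : - (zz j)%:P * ('X - (rr j)%:P) = 1 - y.
  rewrite mulrBr mulNr mulNr opprK -polyCM zz_rr // /y addrC. done.
rewrite -mulrA mulrC -mulrA (mulrC _ (- (zz j)%:P)) H1.
have H2 : y ^+ n = eps *: 'X^n.
  by rewrite /y exprMn -rmorphXn zz_pow // mul_polyC.
rewrite -H2.
have := subrX1 y n => H3.
by rewrite -[LHS]opprB H3 -mulNr opprB mulrC.
Qed.

Lemma coefEB j b : (j < l)%N -> (b < n)%N -> (Ep * Bp j)`_b = - zz j ^+ b.+1.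
Proof.
move=> hj hb; rewrite EB // -polyCN coefCM coef_sum.
rewrite (bigD1 (Ordinal hb)) //= big1 ?addr0.
  by rewrite exprMn -rmorphXn coefCM coefXn eqxx mulr1 exprS mulNr.
move=> a; rewrite -val_eqE /= => hab.
by rewrite exprMn -rmorphXn coefCM coefXn eq_sym (negbTE hab) mulr0.
Qed.


Definition Gm (lamf : nat -> nat) : 'M[algC]_(n - k) :=
  \matrix_(i, s) sigma v ((lamf i)%:Z + s%:Z - i%:Z).
Definition Mm : 'M[algC]_(n - k) := \matrix_(s, j) (Bp j)`_(l.-1 - s).
Definition Vm (lamf : nat -> nat) : 'M[algC]_(n - k) :=
  \matrix_(i, j) zz j ^+ (lamf i + (l.-1 - i)).

Lemma GM lamf : (forall i, (i < l)%N -> (lamf i <= k)%N) ->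
  Gm lamf *m Mm = \matrix_(i, j) (Vm lamf i j * - zz j).
Proof.
move=> hlam; apply/matrixP => i j; rewrite !mxE.
have hi := ltn_ord i; have hj := ltn_ord j.
have hli := hlam i hi.
set e := (lamf i + (l.-1 - i))%N.
have he : (e < n)%N by rewrite /e; lia.
rewrite mulrN -exprSr -coefEB // coefMr.
pose f r := sigma v (e%:Z - r%:Z) * (Bp j)`_r.
transitivity (\sum_(r < n) f r); last first.
  rewrite -(@sum_widen e.+1 n f) //; last first.
    by move=> r h1 h2; rewrite /f sigma_negz ?mul0r //; lia.
  apply: eq_bigr => r _; rewrite coefEp /f; congr (sigma v _ * _).
  by have := ltn_ord r; lia.
have hln : (l <= n)%N by lia.
rewrite -(@sum_widen l n f hln); last first.
  by move=> r h1 h2; rewrite /f nth_default ?mulr0 // size_Bp.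
rewrite (reindex_inj rev_ord_inj) /=; apply: eq_bigr => r _.
rewrite !mxE /f; have hr := ltn_ord r.
congr (sigma v _ * (Bp j)`_ _); rewrite /e /=; lia.
Qed.


Lemma detG0 : \det (Gm (fun _ => 0%N)) = 1.
Proof.
rewrite -det_tr det_trig.
  rewrite big1 // => i _; rewrite !mxE /=.
  by have -> : (0%:Z + i%:Z - i%:Z) = 0 by lia.
apply/forallP => i; apply/forallP => j; apply/implyP => hij.
by rewrite !mxE sigma_negz //; lia.
Qed.

Lemma detV0_neq0 : \det (Vm (fun _ => 0%N)) != 0.
Proof.
have -> : \det (Vm (fun _ => 0%N)) =
   (-1) ^+ (perm (@rev_ord_inj l)) * (\prod_(i < l) 1) * (\prod_(j < l) 1) *
   \det (Vandermonde l (\row_(j < l) zz j)).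
  apply: det_scale_perm => i j; rewrite !mxE permE /= mul1r mulr1.
  by congr (_ ^+ _); have := ltn_ord i; lia.
rewrite !big1 // !mulr1 mulf_neq0 ?signr_eq0 // det_Vandermonde.
apply/prodf_neq0 => i _; apply/prodf_neq0 => j hij.
rewrite !mxE subr_eq0; apply/eqP => /zz_inj H.
by move: hij; rewrite H // ltnn.
Qed.

Lemma prod_zz_neq0 : \prod_(j < l) - zz j != 0.
Proof. by apply/prodf_neq0 => j _; rewrite oppr_eq0 zz_neq0. Qed.

Lemma detVz lamf : \det (\matrix_(i, j) (Vm lamf i j * - zz j)) =
  (\prod_(j < l) - zz j) * \det (Vm lamf).
Proof.
rewrite (@det_scale_perm _ _ (Vm lamf) (fun _ => 1) (fun j => - zz j) 1).
  by rewrite odd_perm1 expr0 big1 // !mul1r.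
by move=> i j; rewrite !mxE perm1 mul1r.
Qed.

Lemma detG lamf : (forall i, (i < l)%N -> (lamf i <= k)%N) ->
  \det (Gm lamf) = \det (Vm lamf) / \det (Vm (fun _ => 0%N)).
Proof.
move=> hlam.
have H1 := congr1 determinant (GM hlam).
have H0 := congr1 determinant (@GM (fun _ => 0%N) (fun _ _ => leq0n _)).
rewrite det_mulmx detVz in H1.
rewrite det_mulmx detVz detG0 mul1r in H0.
rewrite H0 in H1.
apply: (mulIf prod_zz_neq0); apply: (mulIf detV0_neq0).
transitivity (\det (Gm lamf) * (\prod_(j < l) - zz j * \det (Vm (fun=> 0%N)))).
  by rewrite !mulrA.
rewrite H1 mulrC -!mulrA; congr (_ * _).
by rewrite mulrC mulfK ?detV0_neq0.
Qed.


Lemma conj_pow (z : algC) e : (z ^+ e)^* = (z^*) ^+ e.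
Proof. exact: rmorphXn. Qed.

Lemma sign_ok_gen (L d : nat) : (0 < L)%N -> (d <= L)%N ->
  (-1) ^+ (odd ((L - d) * L.-1)) * ((-1) ^+ L.+1) ^+ (L - d) = ((-1) ^+ L.+1) ^+ L :> algC.
Proof.
case: L => // m _ hd.
rewrite -!exprM -[(-1) ^+ (m.+2 * (m.+1 - d))]signr_odd -[X in _ = X]signr_odd -signr_addb; congr (_ ^+ nat_of_bool _).
rewrite !oddM oddB // /=; by case: (odd m); case: (odd d).
Qed.

Lemma div_cancel3 (s U U0 P : algC) : s != 0 -> U0 != 0 -> P != 0 ->
  (s * U / P) / (s * U0 / P) = U / U0.
Proof. by move=> h1 h2 h3; field; rewrite h1 h2 h3. Qed.

Lemma conj_div (x y : algC) : (x / y)^* = x^* / y^*.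
Proof. exact: fmorph_div. Qed.

Lemma zz_norm j : (j < l)%N -> `|zz j| = 1.
Proof.
move=> hj; apply/eqP; rewrite -(@pexpr_eq1 _ _ n) ?normr_ge0 //; last by lia.
by rewrite -normrX zz_pow // /eps normrX normrN1 expr1n.
Qed.

Lemma zz_conj j : (j < l)%N -> (zz j)^* = (zz j)^-1.
Proof. by move=> hj; rewrite invC_norm zz_norm // expr1n invr1 mul1r. Qed.

Definition Um (lamf : nat -> nat) : 'M[algC]_(n - k) :=
  \matrix_(i, j) zz j ^+ (k + (l.-1 - i) - lamf (l.-1 - i))%N.
Definition Wm (lamf : nat -> nat) : 'M[algC]_(n - k) :=
  \matrix_(i, j) zz j ^+ (k + i - lamf i).

Lemma prod_zzn_neq0 : \prod_(j < l) zz j ^+ n.-1 != 0.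
Proof. by apply/prodf_neq0 => j _; rewrite expf_neq0 // zz_neq0. Qed.

Lemma detW lamf : (forall i, (i < l)%N -> (lamf i <= k)%N) ->
  \det (Wm lamf) = (\prod_(j < l) zz j ^+ n.-1) * (\det (Vm lamf))^*.
Proof.
move=> hlam; rewrite -det_map_mx.
rewrite (@det_scale_perm _ _ (map_mx Num.conj_op (Vm lamf)) (fun _ => 1) (fun j => zz j ^+ n.-1) 1).
  by rewrite odd_perm1 expr0 big1 // !mul1r mulrC.
move=> i j; rewrite !mxE perm1 mul1r conj_pow zz_conj //.
have hi := ltn_ord i; have hj := ltn_ord j; have hli := hlam i hi.
have -> : n.-1 = ((k + i - lamf i) + (lamf i + (l.-1 - i)))%N by lia.
set a := (k + i - lamf i)%N; set b := (lamf i + (l.-1 - i))%N.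
rewrite exprD mulrCA -exprMn mulVf ?expr1n ?mulr1 //; exact: zz_neq0.
Qed.

Lemma detW_U lamf : \det (Wm lamf) = (-1) ^+ (perm (@rev_ord_inj l)) * \det (Um lamf).
Proof.
rewrite (@det_scale_perm _ _ (Um lamf) (fun _ => 1) (fun _ => 1) (perm (@rev_ord_inj l))).
  by rewrite !big1 // !mulr1.
move=> i j; rewrite !mxE permE /= mul1r mulr1.
have hi := ltn_ord i.
by have -> : (l.-1 - (l - i.+1) = i)%N by lia.
Qed.

Lemma detU0_neq0 : \det (Um (fun _ => 0%N)) != 0.
Proof.
have := detW (fun _ _ => leq0n _); rewrite detW_U => H.
have : (-1) ^+ (perm (@rev_ord_inj l)) * \det (Um (fun _ => 0%N)) != 0.
  by rewrite H mulf_neq0 ?prod_zzn_neq0 // conjC_eq0 detV0_neq0.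
by rewrite mulf_eq0 negb_or => /andP [].
Qed.

Lemma conjV lamf : (forall i, (i < l)%N -> (lamf i <= k)%N) ->
  (\det (Vm lamf))^* = (-1) ^+ (perm (@rev_ord_inj l)) * \det (Um lamf) /
     (\prod_(j < l) zz j ^+ n.-1).
Proof.
move=> hlam; rewrite -detW_U detW // mulrAC divff ?mul1r //; exact: prod_zzn_neq0.
Qed.

Lemma conj_G lamf : (forall i, (i < l)%N -> (lamf i <= k)%N) ->
  (\det (Gm lamf))^* = \det (Um lamf) / \det (Um (fun _ => 0%N)).
Proof.
move=> hlam; rewrite detG // conj_div conjV // conjV //.
have h1 := prod_zzn_neq0; have h2 := detU0_neq0.
have h3 : (-1) ^+ (perm (@rev_ord_inj l)) != 0 :> algC by rewrite signr_eq0.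
exact: div_cancel3.
Qed.


Lemma detV0_U : \det (Vm (fun _ => 0%N)) =
  eps ^+ l * (\prod_(j < l) zz j ^+ l) * \det (Um (fun _ => 0%N)).
Proof.
rewrite (@det_scale_perm _ _ (Um (fun _ => 0%N)) (fun _ => eps) (fun j => zz j ^+ l) 1).
  by rewrite odd_perm1 expr0 mul1r prodr_const card_ord.
move=> i j; rewrite !mxE perm1.
have hi := ltn_ord i; have hj := ltn_ord j.
rewrite -mulrA -exprD.
have -> : (k + (l.-1 - i) - 0 + l = (0 + (l.-1 - i)) + n)%N by lia.
by rewrite !add0n exprD zz_pow // mulrCA eps_sq mulr1.
Qed.

Lemma prod_eps (d : nat) : (d <= l)%N ->
  \prod_(i < l) (if (i < d)%N then 1 else eps) = eps ^+ (l - d).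
Proof.
move=> hd; rewrite -(big_mkord xpredT (fun i => if (i < d)%N then 1 else eps)).
rewrite (big_cat_nat (n := d) (leq0n d) hd) /= big_nat_cond big1 ?mul1r; last first.
  by move=> i /andP [/andP [_ ->]].
rewrite big_nat_cond (eq_bigr (fun _ => eps)); last first.
  by move=> i /andP [/andP [h _] _]; rewrite ltnNge h.
by rewrite -big_nat_cond prodr_const_nat.
Qed.

Lemma detV_bar (lam : part k n) :
  \det (Vm (lam_at (bar_part lam))) =
  (-1) ^+ (rot l (l - durfee lam)) * eps ^+ (l - durfee lam) *
  (\prod_(j < l) zz j ^+ l) * \det (Um (lam_at lam)).
Proof.
set d := durfee lam.
have hdl : (d <= l)%N := durfee_le lam.
rewrite (@det_scale_perm _ _ (Um (lam_at lam)) (fun i => if (i < d)%N then 1 else eps)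
          (fun j => zz j ^+ l) (rot l (l - d))).
  by rewrite prod_eps.
move=> i j; rewrite !mxE rotE lam_at_bar nth_bar // -/d.
have hi := ltn_ord i; have hj := ltn_ord j.
case: (ltnP i d) => hid.
  rewrite modn_small; last by lia.
  rewrite mul1r -exprD.
  have -> : (l.-1 - (i + (l - d)) = d - 1 - i)%N by lia.
  have h1 := durfee_lam (i := (d - 1 - i)%N) (lam := lam).
  have h2 := lam_le_k lam (d - 1 - i).
  congr (_ ^+ _); rewrite -/d in h1; move: h1 => /(_ ltac:(lia)) h1; lia.
have -> : ((i + (l - d)) %% l = i - d)%N.
  by rewrite (_ : (i + (l - d) = (i - d) + l)%N) ?modnDr ?modn_small //; lia.
have -> : (l.-1 - (i - d) = l - 1 - i + d)%N by lia.
have h1 := durfee_tail (lam := lam) (i := (l - 1 - i + d)%N).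
rewrite -/d in h1; move: h1 => /(_ ltac:(lia) ltac:(lia)) h1.
rewrite -mulrA -exprD.
have -> : (k + (l - 1 - i + d) - lam_at lam (l - 1 - i + d) + l =
           (d - lam_at lam (l - 1 - i + d) + (l.-1 - i)) + n)%N by lia.
by rewrite [X in _ = _ * X]exprD zz_pow // mulrCA eps_sq mulr1.
Qed.

Lemma bar_conj (lam : part k n) :
  \det (Gm (lam_at (bar_part lam))) = (\det (Gm (lam_at lam)))^*.
Proof.
rewrite conj_G; last by move=> i _; exact: lam_le_k.
rewrite detG; last by move=> i _; exact: lam_le_k.
rewrite detV_bar detV0_U odd_rot /eps sign_ok_gen; last exact: durfee_le; last by lia.
rewrite -/eps -!mulrA.
set P := \prod_(j < l) _.
have hP : P != 0 by apply/prodf_neq0 => j _; rewrite expf_neq0 // zz_neq0.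
have he : eps ^+ l != 0 by rewrite expf_neq0 // eps_neq0.
have hU := detU0_neq0.
by field; rewrite he hP hU.
Qed.

End Poly.

Lemma conj_sum (I : finType) (F : I -> algC) : (\sum_i F i)^* = \sum_i (F i)^*.
Proof. exact: rmorph_sum. Qed.
Lemma conj_mul (x y : algC) : (x * y)^* = x^* * y^*.
Proof. exact: rmorphM. Qed.
Lemma conj_add (x y : algC) : (x + y)^* = x^* + y^*.
Proof. exact: rmorphD. Qed.
Lemma conj_int (z : int) : ((z%:~R : algC))^* = z%:~R.
Proof. exact: rmorph_int. Qed.
Lemma conj_rect (x : algC) : x^* = 'Re x - 'i * 'Im x.
Proof.
rewrite {1}[x]Crect conj_add conj_mul conjCi !conj_Creal ?Creal_Re ?Creal_Im //.
by rewrite mulNr.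
Qed.

Lemma ev_bar k n (hk : (0 < k)%N) (hkn : (k < n)%N) (D : QH k n) (p : qpoint k n) :
  ev (qh_bar D) p = (ev D p)^*.
Proof.
case: p => vv hvv; rewrite /ev conj_sum.
transitivity (\sum_lam (D lam)%:~R * schub_eval (bar_part lam) (exist _ vv hvv)).
  rewrite [RHS](partition_big (fun lam => bar_part lam) xpredT) //.
  apply: eq_bigr => mu _; rewrite ffunE rmorph_sum mulr_suml.
  by apply: eq_bigr => lam /eqP ->.
apply: eq_bigr => lam _; rewrite conj_mul conj_int; congr (_ * _).
exact: (bar_conj hk hkn hvv lam).
Qed.

Theorem mainTheorem8 (k n : nat) (hk : (0 < k)%N) (hkn : (k < n)%N) (D : QH k n) :
  let a := fun p : qpoint k n => 'Re (ev D p) in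
  let b := fun p : qpoint k n => 'Im (ev D p) in
  (exists r : qpoint k n -> algC,
      (forall p, r p \is Num.real /\ 0 < r p) /\
      (forall p, ev (qh_bar D) p = r p * (a p - 'i * b p)))
  /\ (forall p, ev D p * ev (qh_bar D) p \is Num.real).
Proof.
move=> a b; split.
  exists (fun _ => 1); split; first by move=> p; split; [exact: rpred1 | exact: ltr01].
  by move=> p; rewrite mul1r ev_bar // conj_rect.
move=> p; rewrite ev_bar // -normCK.
by apply: rpredX; exact: normr_real.
Qed.
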